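(* Let $G$ be an abelian Hausdorff topological group and let $A\subseteq G$. The following conditions are equivalent: (i) $A$ is both topologically independent and absolutely Cauchy summable in $G$; (ii) the Kalton map $K_A:S_A\to G$ is a topologically isomorphic embedding (i.e. a continuous injective homomorphism which is a homeomorphism onto its image $K_A(S_A)=\langle A\rangle$).
   Context: All groups are abelian and all topological groups are Hausdorff. For $a\in G$, $\langle a\rangle$ denotes the cyclic subgroup generated by $a$ with the subspace topology, and $\langle A\rangle$ denotes the subgroup generated by $A$. For $A\subseteq G\setminus\{0\}$, $P_A=\prod_{a\in A}\langle a\rangle$ carries the Tychonoff product topology, and $S_A=\bigoplus_{a\in A}\langle a\rangle$ (elements of $P_A$ with finitely many nonzero coordinates) carries the subspace topology from $P_A$. The Kalton map $K_A:S_A\to G$ is the unique group homomorphism extending each inclusion $\langle a\rangle\to G$, $a\in A$ (so $K_A(\{g_a\})=\sum_a g_a$). A subset $A\subseteq G$ is absolutely Cauchy summable if for every neighbourhood $U$ of $0$ there is a finite $F\subseteq A$ with $\langle A\setminus F\rangle\subseteq U$. A subset $A\subseteq G$ is topologically independent if $0\notin A$ and for every neighbourhood $W$ of $0$ there is a neighbourhood $U$ of $0$ such that for every finite $F\subseteq A$ and all integers $\{z_a:a\in F\}$, $\sum_{a\in F}z_aa\in U$ implies $z_aa\in W$ for all $a\in F$. (Condition (ii) is to be read for $0\notin A$, so that $K_A$ is defined.) *)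

(* Defs.v *)
From HB Require Import structures.
From mathcomp Require Import all_boot all_order all_algebra.
From mathcomp Require Import all_classical all_reals all_analysis.
Set Implicit Arguments. Unset Strict Implicit. Unset Printing Implicit Defensive.
Import Order.TTheory GRing.Theory Num.Theory.
Local Open Scope classical_set_scope.
Local Open Scope ring_scope.

Section KaltonDefs.
Variable G : topologicalZmodType.

Definition cyclic_sub (a : G) : set G := [set x | exists n : int, x = a *~ n].

Definition gen_subgroup (A : set G) : set G :=
  [set x | forall H : set G, A `<=` H -> H 0 ->
     (forall u v, H u -> H v -> H (u - v)) -> H x].

Definition abs_cauchy_summable (A : set G) : Prop :=
  forall U : set G, nbhs (0 : G) U ->
    exists F : set G, [/\ finite_set F, F `<=` A & gen_subgroup (A `\` F) `<=` U].

Definition topologically_independent (A : set G) : Prop :=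
  ~ A 0 /\
  forall W : set G, nbhs (0 : G) W ->
    exists2 U : set G, nbhs (0 : G) U &
      forall (F : set G) (z : G -> int), finite_set F -> F `<=` A ->
        U (\sum_(a \in F) a *~ z a) -> forall a, F a -> W (a *~ z a).

(* S_A : elements of prod_{a in A} <a> (coordinates indexed by a : G, zero off A)
   with finitely many nonzero coordinates *)
Definition S_set (A : set G) : set (G -> G) :=
  [set g | [/\ forall a, A a -> cyclic_sub a (g a),
              forall a, ~ A a -> g a = 0 &
              finite_set [set a | g a != 0]]].

(* Neighbourhoods of x in S_A for the subspace topology of the Tychonoff
   product P_A of the subspaces <a> of G. *)
Definition S_nbhs (A : set G) (x : G -> G) (V : set (G -> G)) : Prop :=
  exists F : set G, [/\ finite_set F, F `<=` A &
    exists U : G -> set G, (forall a, F a -> nbhs (x a) (U a)) /\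
      forall y, S_set A y -> (forall a, F a -> U a (y a)) -> V y].

Definition kalton (g : G -> G) : G := \sum_(a \in [set a | g a != 0]) g a.

Definition kalton_embedding (A : set G) : Prop :=
  [/\ (forall x y, S_set A x -> S_set A y -> kalton (x + y) = kalton x + kalton y),
      (forall x y, S_set A x -> S_set A y -> kalton x = kalton y -> x = y),
      (forall x, S_set A x -> forall U : set G, nbhs (kalton x) U ->
          S_nbhs A x [set y | U (kalton y)]) &
      (forall x, S_set A x -> forall V, S_nbhs A x V ->
          exists2 W : set G, nbhs (kalton x) W &
            forall y, S_set A y -> W (kalton y) ->
              exists y', [/\ S_set A y', V y' & kalton y' = kalton y])].

End KaltonDefs.

(* Main.v *)
Require Import Defs.
From HB Require Import structures.
From mathcomp Require Import all_boot all_order all_algebra.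
From mathcomp Require Import all_classical all_reals all_analysis.
Set Implicit Arguments. Unset Strict Implicit. Unset Printing Implicit Defensive.
Import Order.TTheory GRing.Theory Num.Theory.
Local Open Scope classical_set_scope.
Local Open Scope ring_scope.

Section Helpers.
Variable G : topologicalZmodType.
Implicit Types (U V W : set G).

Lemma nbhs_to0 (x : G) U : nbhs x U -> nbhs (0:G) (fun w => U (x + w)).
Proof.
move=> Ux; have /= := @add_continuous G (x, 0) U; rewrite addr0 => /(_ Ux).
move=> [B] [B1 B2] BU; apply: filterS B2 => w Bw.
exact: (BU (x, w)) (conj (nbhs_singleton B1) Bw).
Qed.

Lemma nbhs_from0 (x : G) U : nbhs (0:G) U -> nbhs x (fun y => U (y - x)).
Proof.
move=> U0; have /= := @sub_continuous G (x, x) U; rewrite subrr => /(_ U0).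
move=> [B] [B1 B2] BU; apply: filterS B1 => w Bw.
exact: (BU (w, x)) (conj Bw (nbhs_singleton B2)).
Qed.

Lemma nbhs_split U : nbhs (0:G) U ->
  exists2 V, nbhs (0:G) V & forall u v, V u -> V v -> U (u + v).
Proof.
move=> U0; have /= := @add_continuous G (0, 0) U; rewrite addr0 => /(_ U0).
move=> [B] [B1 B2] BU; exists (B.1 `&` B.2); first exact: filterI.
by move=> u v [Bu _] [_ Bv]; exact: (BU (u, v)).
Qed.

Lemma sums_small (n : nat) U : nbhs (0:G) U ->
  exists2 V, nbhs (0:G) V & forall (s : seq G) (f : G -> G), (size s <= n)%N ->
    (forall i, V (f i)) -> U (\sum_(i <- s) f i).
Proof.
elim: n U => [|n IH] U U0.
  exists U => // -[|//] f _ _; rewrite big_nil; exact: nbhs_singleton.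
have [V1 V10 V1U] := nbhs_split U0.
have [V' V'0 V'P] := IH _ V10.
exists (V1 `&` V'); first exact: filterI.
move=> [|i s] f /= hs hf; first by rewrite big_nil; exact: nbhs_singleton.
rewrite big_cons; apply: V1U; first by case: (hf i).
by apply: V'P => // j; case: (hf j).
Qed.

Lemma nbhs_bigI (s : seq G) (P : G -> set G) :
  (forall a, a \in s -> nbhs (0:G) (P a)) ->
  nbhs (0:G) (fun w => forall a, a \in s -> P a w).
Proof.
elim: s => [|b s IH] hP.
  by apply: filterS filterT => w _ a.
have : nbhs (0:G) (P b `&` (fun w => forall a, a \in s -> P a w)).
  apply: filterI; first by apply: hP; rewrite inE eqxx.
  by apply: IH => a ha; apply: hP; rewrite inE ha orbT.
apply: filterS => w [Pb Ps] a; rewrite inE => /orP[/eqP->//|]; exact: Ps.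
Qed.

Lemma haus0 (hG : hausdorff_space G) (x : G) :
  (forall W, nbhs (0:G) W -> W x) -> x = 0.
Proof.
move=> hx; apply/esym/hG => A B A0 Bx.
by exists x; split; [exact: hx|exact: nbhs_singleton].
Qed.

End Helpers.

Section K.
Variable G : topologicalZmodType.

Definition supp (x : G -> G) := [set a | x a != 0].

Lemma K_sum (x : G -> G) P : supp x `<=` P -> kalton x = \sum_(a \in P) x a.
Proof.
move=> sP; rewrite /kalton; apply: fsbig_widen => // a [_].
by move=> /negP; rewrite negbK => /eqP.
Qed.

Lemma K_add (x y : G -> G) : finite_set (supp x) -> finite_set (supp y) ->
  kalton (x + y) = kalton x + kalton y.
Proof.
move=> fx fy; set P := supp x `|` supp y.
have fP : finite_set P by rewrite finite_setU.
rewrite (@K_sum (x + y) P); last first.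
  move=> a; rewrite /supp /P /= => h.
  have [xa|xa] := eqVneq (x a) 0; last by left.
  have [ya|ya] := eqVneq (y a) 0; last by right.
  by move: h; rewrite /GRing.add /= xa ya addr0 eqxx.
rewrite (@K_sum x P); last by move=> a h; left.
rewrite (@K_sum y P); last by move=> a h; right.
exact: fsbig_split.
Qed.

Lemma K0 : kalton (0 : G -> G) = 0.
Proof. by rewrite /kalton fsbig1. Qed.

Lemma K_opp (x : G -> G) : finite_set (supp x) -> kalton (- x) = - kalton x.
Proof.
move=> fx; apply: (@addrI _ (kalton x)); rewrite -K_add //.
  by rewrite !subrr K0.
by apply: sub_finite_set fx => a; rewrite /supp /= oppr_eq0.
Qed.

Lemma K_sub (x y : G -> G) : finite_set (supp x) -> finite_set (supp y) ->
  kalton (x - y) = kalton x - kalton y.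
Proof.
move=> fx fy; rewrite K_add ?K_opp //.
by apply: sub_finite_set fy => a; rewrite /supp /= oppr_eq0.
Qed.

End K.
Section S.
Variable G : topologicalZmodType.
Variable A : set G.

Lemma fsubE (x y : G -> G) a : (x - y) a = x a - y a.
Proof. by []. Qed.
Lemma faddE (x y : G -> G) a : (x + y) a = x a + y a.
Proof. by []. Qed.

Lemma S_fin (x : G -> G) : S_set A x -> finite_set (supp x).
Proof. by case. Qed.

Lemma S_suppA (x : G -> G) : S_set A x -> supp x `<=` A.
Proof.
move=> [_ h _] a xa; have [//|nA] := pselect (A a).
by move: xa; rewrite /supp /= h // eqxx.
Qed.

Lemma K_subS (x y : G -> G) : S_set A x -> S_set A y ->
  kalton (x - y) = kalton x - kalton y.
Proof. by move=> Sx Sy; apply: K_sub; [exact: (S_fin Sx)|exact: (S_fin Sy)]. Qed.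

Lemma cyc_sub (a u v : G) : cyclic_sub a u -> cyclic_sub a v -> cyclic_sub a (u - v).
Proof. by move=> [m ->] [n ->]; exists (m - n); rewrite mulrzBr. Qed.

Lemma cyc0 (a : G) : cyclic_sub a 0.
Proof. by exists 0; rewrite mulr0z. Qed.

Lemma S0 : S_set A 0.
Proof.
split=> // [a _|]; first exact: cyc0.
by apply: sub_finite_set (@finite_set0 G) => a /=; rewrite eqxx.
Qed.

Lemma S_sub (x y : G -> G) : S_set A x -> S_set A y -> S_set A (x - y).
Proof.
move=> [x1 x2 x3] [y1 y2 y3]; split.
- by move=> a Aa; apply: cyc_sub; [exact: x1|exact: y1].
- by move=> a Aa; rewrite fsubE x2 // y2 // subrr.
- apply: sub_finite_set (_ : finite_set (supp x `|` supp y)); last by rewrite finite_setU.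
  move=> a /= h.
  have [xa|xa] := eqVneq (x a) 0; last by left.
  have [ya|ya] := eqVneq (y a) 0; last by right.
  by move: h; rewrite fsubE xa ya subrr eqxx.
Qed.

Lemma S_rep (x : G -> G) : S_set A x -> exists z : G -> int, forall a, x a = a *~ z a.
Proof.
move=> [x1 x2 _].
have h : forall a, exists n : int, x a = a *~ n.
  move=> a; have [Aa|nAa] := pselect (A a); first by have [n ->] := x1 a Aa; exists n.
  by exists 0; rewrite x2 // mulr0z.
by have [z hz] := choice h; exists z.
Qed.

Lemma K_rep (x : G -> G) (z : G -> int) : (forall a, x a = a *~ z a) ->
  kalton x = \sum_(a \in supp x) a *~ z a.
Proof. by move=> hz; rewrite /kalton; apply: eq_fsbigr => a _; rewrite hz. Qed.

Section Gen.
Variable H : set G.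
Hypothesis H0 : H 0.
Hypothesis HB : forall u v, H u -> H v -> H (u - v).

Lemma H_opp u : H u -> H (- u).
Proof. by move=> Hu; rewrite -sub0r; apply: HB. Qed.

Lemma H_add u v : H u -> H v -> H (u + v).
Proof. by move=> Hu Hv; rewrite -[v]opprK; apply: HB => //; apply: H_opp. Qed.

Lemma H_mulz u n : H u -> H (u *~ n).
Proof.
move=> Hu; have Hn : forall k : nat, H (u *+ k).
  by elim=> [|k IH]; rewrite ?mulr0n // mulrS; apply: H_add.
case: n => k; first by rewrite -pmulrn; apply: Hn.
by rewrite NegzE mulrNz -pmulrn; apply: H_opp.
Qed.

Lemma H_K (B : set G) (y : G -> G) : B `<=` H -> S_set A y ->
  (forall a, y a != 0 -> B a) -> H (kalton y).
Proof.
move=> BH Sy yB; rewrite /kalton; apply: big_ind => //; first exact: H_add.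
move=> a _; have [->//|ya] := eqVneq (y a) 0.
have Ba := yB a ya; have Aa : A a by apply: (S_suppA Sy).
have [y1 _ _] := Sy; have [n ->] := y1 a Aa.
by apply: H_mulz; apply: BH.
Qed.
End Gen.
End S.
Lemma zmod_id (G : zmodType) (a b c : G) : a + ((c - a) + (b - c)) = b.
Proof. by rewrite addrCA addrA addrNK addrC subrK. Qed.

Section Main.
Variable G : topologicalZmodType.
Variable A : set G.

Lemma gen_K (B : set G) (y : G -> G) : S_set A y ->
  (forall a, y a != 0 -> B a) -> gen_subgroup B (kalton y).
Proof.
move=> Sy yB H BH H0 HB; exact: (@H_K G A H H0 HB B y BH Sy yB).
Qed.

Lemma gen_mulz (B : set G) a n : B a -> gen_subgroup B (a *~ n).
Proof.
move=> Ba H BH H0 HB; apply: (@H_mulz G H H0 HB); exact: BH.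
Qed.

Lemma ii_acs : ~ A 0 -> kalton_embedding A -> abs_cauchy_summable A.
Proof.
move=> nA0 [_ inj cont _] U U0.
have := cont 0 (S0 A) U; rewrite K0 => /(_ U0) [F [fF FA [Ua [Ua0 hV]]]].
exists F; split => // u gu.
pose H := [set v | exists y, [/\ S_set A y, (forall a, F a -> y a = 0) & kalton y = v]].
have : H u.
  apply: gu.
  - move=> a [Aa nFa].
    exists (fun b => if b == a then a else 0); split.
    + split.
      * move=> b _; case: eqP => [->|_]; last exact: cyc0.
        by exists 1; rewrite mulr1z.
      * by move=> b nAb; case: eqP => // eba; rewrite eba in nAb.
      * apply: sub_finite_set (finite_set1 a) => b /=.
        by have [->//|nba] := eqVneq b a; rewrite eqxx.
    + by move=> b Fb; case: eqP => // eba; rewrite eba in Fb.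
    + rewrite (@K_sum _ _ [set a]); first by rewrite fsbig_set1 eqxx.
      by move=> b; rewrite /supp /=; have [->//|nba] := eqVneq b a; rewrite eqxx.
  - by exists 0; split; [exact: S0| |exact: K0].
  - move=> v w [y [Sy yF <-]] [y' [Sy' yF' <-]].
    exists (y - y'); split; first exact: S_sub.
      by move=> a Fa; rewrite fsubE yF // yF' // subrr.
    by rewrite K_sub //; [exact: (S_fin Sy)|exact: (S_fin Sy')].
move=> [y [Sy yF <-]]; apply: (hV y Sy) => a Fa.
rewrite yF //; exact: (nbhs_singleton (Ua0 a Fa)).
Qed.

Lemma ii_ti : ~ A 0 -> kalton_embedding A -> topologically_independent A.
Proof.
move=> nA0 KE; have acs := ii_acs nA0 KE; move: KE => [_ inj _ op].
split => // W W0.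
have [F0 [fF0 F0A F0W]] := acs W W0.
pose V := [set y : G -> G | forall a, F0 a -> W (y a)].
have HV : S_nbhs A 0 V.
  exists F0; split => //; exists (fun _ => W); split => //.
have [W' W'0 hW] := op 0 (S0 A) V HV.
rewrite K0 in W'0; exists W' => // F z fF FA hU a Fa.
pose d := fun b => if b \in F then b *~ z b else 0.
have Sd : S_set A d.
  split.
  - move=> b _; rewrite /d; case: ifP => _; [by exists (z b)|exact: cyc0].
  - by move=> b nAb; rewrite /d; case: ifP => // /set_mem /FA.
  - apply: (@sub_finite_set _ _ F) fF => b; rewrite /d /=; case: ifP => [/set_mem //|_].
    by rewrite eqxx.
have Kd : kalton d = \sum_(a \in F) a *~ z a.
  rewrite (@K_sum _ _ F); last first.
    by move=> b; rewrite /supp /d /=; case: ifP => [/set_mem //|_]; rewrite eqxx.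
  by apply: eq_fsbigr => b Fb; rewrite /d Fb.
have := hW d Sd; rewrite Kd => /(_ hU) [y' [Sy' Vy' Ky']].
have ey : y' = d by apply: inj _ _ Sy' Sd _; rewrite Ky' Kd.
have dza : d a = a *~ z a by rewrite /d mem_set.
have [F0a|nF0a] := pselect (F0 a).
  by rewrite -dza -ey; apply: Vy'.
by apply: F0W; apply: gen_mulz; split => //; apply: FA.
Qed.

Lemma TI_use (W : set G) : topologically_independent A -> nbhs (0:G) W ->
  exists2 U, nbhs (0:G) U &
    forall d, S_set A d -> U (kalton d) -> forall a, W (d a).
Proof.
move=> [_ ti] W0; have [U U0 hU] := ti W W0; exists U => // d Sd Ud a.
have [z hz] := S_rep Sd.
have [->|da] := eqVneq (d a) 0; first exact: nbhs_singleton W0.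
rewrite hz; apply: (hU (supp d) z (S_fin Sd) (S_suppA Sd)) => //.
by rewrite -K_rep.
Qed.

Lemma i_ii (hG : hausdorff_space G) : topologically_independent A ->
  abs_cauchy_summable A -> kalton_embedding A.
Proof.
move=> ti acs; split.
- by move=> x y Sx Sy; apply: K_add; [exact: (S_fin Sx)|exact: (S_fin Sy)].
- move=> x y Sx Sy Kxy; apply/funext => a; apply/eqP; rewrite -subr_eq0; apply/eqP.
  rewrite -fsubE; apply: (@haus0 G hG) => W W0.
  have [U U0 hU] := TI_use ti W0.
  apply: hU; first exact: S_sub.
  by rewrite (K_subS Sx Sy) Kxy subrr; exact: nbhs_singleton U0.
- move=> x Sx U Ux.
  have U'0 := nbhs_to0 Ux.
  have [V1 V10 V1P] := nbhs_split U'0.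
  have [F0 [fF0 F0A F0V]] := acs V1 V10.
  pose F := F0 `|` supp x.
  have fF : finite_set F by rewrite finite_setU; split => //; exact: (S_fin Sx).
  have FA : F `<=` A by move=> a [/F0A|/(S_suppA Sx)].
  have [V2 V20 V2P] := sums_small (size (finmap.enum_fset (fset_set F))) V10.
  exists F; split => //; exists (fun a => fun w => V2 (w - x a)); split.
    by move=> a _; exact: nbhs_from0.
  move=> y Sy hy /=.
  pose y1 := fun a => if a \in F then y a else 0.
  have Sy1 : S_set A y1.
    have [ya yb yc] := Sy.
    split.
    - by move=> a Aa; rewrite /y1; case: ifP => _; [exact: ya|exact: cyc0].
    - by move=> a nAa; rewrite /y1; case: ifP => _ //; exact: yb.
    - apply: sub_finite_set yc => a; rewrite /y1 /=; case: ifP => // _.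
      by rewrite eqxx.
  have Sy2 := S_sub Sy Sy1.
  have e : kalton y = kalton x + (kalton (y1 - x) + kalton (y - y1)).
    by rewrite (K_subS Sy1 Sx) (K_subS Sy Sy1) zmod_id.
  rewrite e; apply: V1P.
  + rewrite /kalton; case: finite_supportP => [_|X XP _ _].
      by rewrite big_nil; exact: nbhs_singleton V10.
    apply: V2P.
      apply: uniq_leq_size; first exact: finmap.fset_uniq.
      move=> i iX; rewrite in_fset_set //; apply: mem_set.
      have := XP i iX; rewrite /= fsubE /y1; case: ifP => [/set_mem //|_].
      rewrite sub0r oppr_eq0 => xi; right; exact: xi.
    move=> i; rewrite fsubE /y1; case: ifP => [/set_mem Fi|nFi].
      exact: hy i Fi.
    have -> : x i = 0.
      apply/eqP; apply: contraFT nFi => xi; apply: mem_set; right; exact: xi.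
    by rewrite subrr; exact: nbhs_singleton V20.
  + apply: F0V; apply: gen_K => // a; rewrite fsubE /y1.
    case: ifP => [_|nFa]; first by rewrite subrr eqxx.
    move=> ya; split.
      by apply: (S_suppA Sy2); rewrite /supp /= fsubE /y1 nFa.
    by move=> F0a; move: nFa; rewrite mem_set //; left.
- move=> x Sx V [F [fF FA [Ua [Ua0 hV]]]].
  pose W0 := fun w => forall a, a \in finmap.enum_fset (fset_set F) -> Ua a (x a + w).
  have W00 : nbhs (0:G) W0.
    apply: (@nbhs_bigI G (finmap.enum_fset (fset_set F)) (fun a w => Ua a (x a + w))) => a aF.
    apply: nbhs_to0; apply: Ua0; move: aF; rewrite in_fset_set //; exact: set_mem.
  have [U0 U00 hU0] := TI_use ti W00.
  exists (fun v => U0 (v - kalton x)); first exact: nbhs_from0.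
  move=> y Sy hy; exists y; split => //.
  apply: (hV y Sy) => a Fa.
  have := hU0 (y - x) (S_sub Sy Sx) _ a.
  rewrite (K_subS Sy Sx) => /(_ hy).
  move=> /(_ a); rewrite fsubE [x a + _]addrC subrK; apply; rewrite in_fset_set //; exact: mem_set.
Qed.

End Main.

Theorem theorem5p1 (G : topologicalZmodType) (hG : hausdorff_space G) (A : set G) :
  (topologically_independent A /\ abs_cauchy_summable A) <->
  (~ A 0 /\ kalton_embedding A).
Proof.
split.
- move=> [ti acs]; split; first by case: ti.
  exact: i_ii.
- move=> [nA0 KE]; split; [exact: ii_ti|exact: ii_acs].
Qed.
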